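(* Let $T=((\Omega,\mathcal{A}),\{(\Omega,\mathcal{M}_i)\}_{i\in N},\{t_i\}_{i\in N})$ be a type space. Then exactly one of the following holds: (a) the players' beliefs in $T$ are universally consistent; (b) $T$ admits a universal money pump.
   Context: A field on a set $X$ is a collection of subsets of $X$ containing $X$ and closed under complements and finite intersections. For a field $\mathcal{A}$ on $\Omega$, $\mathrm{pba}(\Omega,\mathcal{A})$ is the set of finitely additive nonnegative $P:\mathcal{A}\to\mathbb{R}$ with $P(\Omega)=1$; $B(\Omega,\mathcal{A})$ is the sup-norm closure of the linear span of indicators of sets in $\mathcal{A}$. $\mathrm{ba}(\Omega,\mathcal{A})$ carries the weak* topology (weakest making $\mu\mapsto\int f\,d\mu$ continuous for all $f\in B(\Omega,\mathcal{A})$); $\overline{\,\cdot\,}^\ast$ denotes weak* closure. A type space is $T=((\Omega,\mathcal{A}),\{(\Omega,\mathcal{M}_i)\}_{i\in N},\{t_i\}_{i\in N})$ with $N$ a nonempty set of players, fields $\mathcal{M}_i\subseteq\mathcal{A}$ on a set $\Omega$, and $t_i:\Omega\times\mathcal{A}\to[0,1]$ with: $t_i(\omega,\cdot)\in\mathrm{pba}(\Omega,\mathcal{A})$; $t_i(\cdot,E)\in B(\Omega,\mathcal{M}_i)$ for all $E\in\mathcal{A}$; $t_i(\omega,E)=1$ whenever $E\in\mathcal{M}_i$, $\omega\in E$. Let $\Pi_i=\overline{\mathrm{conv}\{t_i(\omega,\cdot):\omega\in\Omega\}}^\ast$ (equivalently the $P\in\mathrm{pba}(\Omega,\mathcal{A})$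 with $P(E\cap F)=\int_F t_i(\cdot,E)\,dP$ for all $E\in\mathcal{A},F\in\mathcal{M}_i$). For $I\subseteq N$, a nonempty $S\subseteq\Omega$ is an $I$-common certainty component if there is $E\in\mathcal{A}$ with $E\subseteq S$ and $t_i(\omega,E)=1$ for all $\omega\in S$, $i\in I$. A set $E$ is $I$-commonly certain at $\omega$ if there is an $I$-common certainty component $S$ with $\omega\in S\subseteq E$. Universal consistency: for every finite $I\subseteq N$ and every $I$-common certainty component $S$ there is $P\in\bigcap_{i\in I}\Pi_i$ with $\inf\{P(E):E\in\mathcal{A},S\subseteq E\}>0$. A semi-bet is a family $(f_i)_{i\in I}\subseteq B(\Omega,\mathcal{A})$, $I\subseteq N$ finite, such that for every $\omega\in\Omega$ the set $\{\omega':\int f_i\,dt_i(\omega',\cdot)\ge0\ \forall i\in I\}$ is $I$-commonly certain at $\omega$. $T$ admits a universal money pump if there exist a finite $I\subseteq N$ and an $I$-common certainty component $S$ such that for every $P\in\mathrm{pba}(\Omega,\mathcal{A})$ with $\inf\{P(E):E\in\mathcal{A},S\subseteq E\}>0$ there is a semi-bet $(f_i)_{i\in I}$ with $\int\sum_{i\in I}f_i\,dP<0$. *)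

(* Defs.v *)
From Stdlib Require Import Reals Lra List ClassicalEpsilon.
Import ListNotations.
Open Scope R_scope.

Section TypeSpaces.
Context {Omega : Type}.

Definition set := Omega -> Prop.
Definition setT : set := fun _ => True.
Definition setC (E : set) : set := fun x => ~ E x.
Definition setI (E F : set) : set := fun x => E x /\ F x.
Definition setU (E F : set) : set := fun x => E x \/ F x.
Definition subset (E F : set) : Prop := forall x, E x -> F x.

Definition is_field (A : set -> Prop) : Prop :=
  A setT /\ (forall E, A E -> A (setC E)) /\
  (forall E F, A E -> A F -> A (setI E F)).

Definition pba (A : set -> Prop) (P : set -> R) : Prop :=
  (forall E, A E -> 0 <= P E) /\
  (forall E F, A E -> A F -> (forall x, E x -> F x -> False) ->
     P (setU E F) = P E + P F) /\
  P setT = 1.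

Definition ind (E : set) (x : Omega) : R :=
  if excluded_middle_informative (E x) then 1 else 0.

Definition simple_eval (l : list (R * set)) (x : Omega) : R :=
  fold_right (fun p acc => fst p * ind (snd p) x + acc) 0 l.
Definition simple_int (P : set -> R) (l : list (R * set)) : R :=
  fold_right (fun p acc => fst p * P (snd p) + acc) 0 l.
Definition simple_over (A : set -> Prop) (l : list (R * set)) : Prop :=
  forall p, In p l -> A (snd p).

Definition inB (A : set -> Prop) (f : Omega -> R) : Prop :=
  forall eps, 0 < eps -> exists l, simple_over A l /\
    forall x, Rabs (f x - simple_eval l x) <= eps.

(* v is the integral of f (in B(Omega,A)) w.r.t. P (in pba(Omega,A)):
   it is within eps of the integral of every simple function
   that is eps-close to f in sup norm. For f in B and P in pba such a
   v exists and is unique, and it is the usual integral. *)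
Definition is_integral (A : set -> Prop) (P : set -> R) (f : Omega -> R) (v : R) : Prop :=
  forall eps, 0 < eps -> forall l, simple_over A l ->
    (forall x, Rabs (f x - simple_eval l x) <= eps) ->
    Rabs (v - simple_int P l) <= eps.

Definition integral (A : set -> Prop) (P : set -> R) (f : Omega -> R) : R :=
  epsilon (inhabits 0) (is_integral A P f).

Definition conv_comb (tau : Omega -> set -> R) (l : list (R * Omega)) : set -> R :=
  fun E => fold_right (fun p acc => fst p * tau (snd p) E + acc) 0 l.
Definition conv_weights (l : list (R * Omega)) : Prop :=
  (forall p, In p l -> 0 <= fst p) /\
  fold_right (fun p acc => fst p + acc) 0 l = 1.

(* Pi_i = weak* closure of conv{ t_i(omega, .) : omega in Omega }.
   (Taken within pba(Omega,A), which is weak*-closed in ba(Omega,A).)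
   Basic weak* neighbourhoods: finitely many f in B(Omega,A) and eps > 0. *)
Definition Pi (A : set -> Prop) (tau : Omega -> set -> R) (P : set -> R) : Prop :=
  pba A P /\
  forall (fs : list (Omega -> R)) eps, (forall f, In f fs -> inB A f) -> 0 < eps ->
    exists l, conv_weights l /\
      forall f, In f fs ->
        Rabs (integral A P f - integral A (conv_comb tau l) f) < eps.

Context {N : Type}.

Definition type_space (A : set -> Prop) (M : N -> set -> Prop)
    (t : N -> Omega -> set -> R) : Prop :=
  is_field A /\
  forall i,
    is_field (M i) /\ (forall E, M i E -> A E) /\
    (forall w E, A E -> 0 <= t i w E <= 1) /\
    (forall w, pba A (t i w)) /\
    (forall E, A E -> inB (M i) (fun w => t i w E)) /\
    (forall E w, M i E -> E w -> t i w E = 1).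

Definition cc_component (A : set -> Prop) (t : N -> Omega -> set -> R)
    (I : list N) (S : set) : Prop :=
  (exists x, S x) /\
  exists E, A E /\ subset E S /\
    forall w, S w -> forall i, In i I -> t i w E = 1.

Definition commonly_certain_at (A : set -> Prop) (t : N -> Omega -> set -> R)
    (I : list N) (E : set) (w : Omega) : Prop :=
  exists S, cc_component A t I S /\ S w /\ subset S E.

Definition inf_outer_pos (A : set -> Prop) (P : set -> R) (S : set) : Prop :=
  exists c, 0 < c /\ forall E, A E -> subset S E -> c <= P E.

Definition universally_consistent (A : set -> Prop) (t : N -> Omega -> set -> R) : Prop :=
  forall (I : list N) (S : set), cc_component A t I S ->
    exists P, pba A P /\ (forall i, In i I -> Pi A (t i) P) /\ inf_outer_pos A P S.

Definition semi_bet (A : set -> Prop) (t : N -> Omega -> set -> R)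
    (I : list N) (f : N -> Omega -> R) : Prop :=
  (forall i, In i I -> inB A (f i)) /\
  forall w, commonly_certain_at A t I
    (fun w' => forall i, In i I -> 0 <= integral A (t i w') (f i)) w.

Definition universal_money_pump (A : set -> Prop) (t : N -> Omega -> set -> R) : Prop :=
  exists (I : list N), NoDup I /\ exists S, cc_component A t I S /\
    forall P, pba A P -> inf_outer_pos A P S ->
      exists f : N -> Omega -> R, semi_bet A t I f /\
        integral A P (fun w => fold_right Rplus 0 (map (fun i => f i w) I)) < 0.

End TypeSpaces.

(* Main.v *)
Require Import Defs.
From Stdlib Require Import Reals List Lra Lia Classical FunctionalExtensionality PropExtensionality ClassicalEpsilon.
Import ListNotations.
Open Scope R_scope.

Lemma set_ext {Omega : Type} (E F : @set Omega) : (forall x, E x <-> F x) -> E = F.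
Proof. intro H; apply functional_extensionality; intro x; apply propositional_extensionality; apply H. Qed.

Lemma le_eps (a b : R) : (forall e, 0 < e -> a <= b + e) -> a <= b.
Proof.
  intro H. destruct (Rle_or_lt a b) as [h|h]; [exact h|].
  specialize (H ((a - b)/2) ltac:(lra)). lra.
Qed.

Lemma pba_empty {Omega : Type} (A : @set Omega -> Prop) P F :
  pba A P -> A F -> (forall x, ~ F x) -> P F = 0.
Proof.
  intros [h0 [hadd h1]] hF hE.
  assert (e : setU F F = F) by (apply set_ext; intro x; unfold setU; tauto).
  pose proof (hadd F F hF hF (fun x a _ => hE x a)) as H. rewrite e in H. lra.
Qed.

Lemma field_I {Omega : Type} (A : @set Omega -> Prop) E F :
  is_field A -> A E -> A F -> A (setI E F).
Proof. intros [_ [_ h]] ; apply h. Qed.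
Lemma field_C {Omega : Type} (A : @set Omega -> Prop) E :
  is_field A -> A E -> A (setC E).
Proof. intros [_ [h _]] ; apply h. Qed.

Lemma pba_split {Omega : Type} (A : @set Omega -> Prop) P G E F :
  is_field A -> pba A P -> A G -> A E -> A F ->
  P (setI G F) = P (setI G (setI E F)) + P (setI G (setI (setC E) F)).
Proof.
  intros hA hP hG hE hF. destruct hP as [_ [hadd _]].
  rewrite <- hadd.
  - f_equal. apply set_ext; intro x; unfold setU, setI, setC.
    destruct (classic (E x)); tauto.
  - apply field_I; auto. apply field_I; auto.
  - apply field_I; auto. apply field_I; auto. apply field_C; auto.
  - intros x h1 h2. unfold setI, setC in *. tauto.
Qed.

Definition sint_on {Omega : Type} (P : @set Omega -> R) (F : @set Omega) (l : list (R * @set Omega)) :=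
  fold_right (fun p acc => fst p * P (setI (snd p) F) + acc) 0 l.

Lemma sint_on_split {Omega : Type} (A : @set Omega -> Prop) P E F l :
  is_field A -> pba A P -> A E -> A F -> simple_over A l ->
  sint_on P F l = sint_on P (setI E F) l + sint_on P (setI (setC E) F) l.
Proof.
  intros hA hP hE hF. induction l as [|[c G] l IH]; intro hl; simpl; [lra|].
  rewrite IH by (intros p hp; apply hl; simpl; auto).
  rewrite (pba_split A P G E F) by (auto; apply (hl (c,G)); simpl; auto).
  ring.
Qed.

Lemma ind_true {Omega : Type} (E : @set Omega) x : E x -> Defs.ind E x = 1.
Proof. intro h. unfold Defs.ind. destruct (excluded_middle_informative (E x)); tauto. Qed.
Lemma ind_false {Omega : Type} (E : @set Omega) x : ~ E x -> Defs.ind E x = 0.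
Proof. intro h. unfold Defs.ind. destruct (excluded_middle_informative (E x)); tauto. Qed.

Lemma key {Omega : Type} (A : @set Omega -> Prop) P :
  is_field A -> pba A P -> forall l, simple_over A l ->
  forall F a d, A F -> (forall x, F x -> Rabs (a + simple_eval l x) <= d) ->
  Rabs (a * P F + sint_on P F l) <= d * P F.
Proof.
  intros hA hP. induction l as [|[c E] l IH]; intros hl F a d hF H.
  - simpl. destruct (classic (exists x, F x)) as [[x hx]|hn].
    + specialize (H x hx). simpl in H. rewrite Rplus_0_r in *.
      destruct hP as [h0 _]. specialize (h0 F hF).
      rewrite Rabs_mult, (Rabs_right (P F)) by lra. apply Rmult_le_compat_r; lra.
    + rewrite (pba_empty A P F hP hF) by (intros x hx; apply hn; eauto). rewrite Rmult_0_r, Rplus_0_r, Rabs_R0. lra.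
  - assert (hE : A E) by (apply (hl (c,E)); simpl; auto).
    assert (hl' : simple_over A l) by (intros p hp; apply hl; simpl; auto).
    assert (hF1 : A (setI E F)) by (apply field_I; auto).
    assert (hF2 : A (setI (setC E) F)) by (apply field_I; auto; apply field_C; auto).
    pose proof (IH hl' (setI E F) (a + c) d hF1) as H1.
    pose proof (IH hl' (setI (setC E) F) a d hF2) as H2.
    assert (e1 : forall x, setI E F x -> Rabs (a + c + simple_eval l x) <= d).
    { intros x [hx1 hx2]. specialize (H x hx2). simpl in H. rewrite ind_true in H by auto. 
      replace (a + c + simple_eval l x) with (a + (c * 1 + simple_eval l x)) by ring. exact H. }
    assert (e2 : forall x, setI (setC E) F x -> Rabs (a + simple_eval l x) <= d).
    { intros x [hx1 hx2]. specialize (H x hx2). simpl in H. rewrite ind_false in H by auto.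
      replace (a + simple_eval l x) with (a + (c * 0 + simple_eval l x)) by ring. exact H. }
    specialize (H1 e1). specialize (H2 e2).
    assert (eF : P F = P (setI E F) + P (setI (setC E) F)).
    { destruct hP as [_ [hadd _]]. rewrite <- hadd; auto.
      - f_equal. apply set_ext; intro x; unfold setU, setI, setC. destruct (classic (E x)); tauto.
      - intros x h1 h2. unfold setI, setC in *. tauto. }
    change (sint_on P F ((c, E) :: l)) with (c * P (setI E F) + sint_on P F l).
    rewrite (sint_on_split A P E F l) by auto.
    replace (d * P F) with (d * P (setI E F) + d * P (setI (setC E) F)) by (rewrite eF; ring).
    rewrite eF.
    eapply Rle_trans; [|apply Rplus_le_compat; [exact H1|exact H2]].
    eapply Rle_trans; [|apply Rabs_triang]. right. f_equal. ring.
Qed.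
Lemma abs_inv (x a : R) : Rabs x <= a -> -a <= x <= a.
Proof. intro h. pose proof (Rle_abs x). pose proof (Rle_abs (-x)). rewrite Rabs_Ropp in *. lra. Qed.

Definition scale_l {Omega : Type} (c : R) (l : list (R * @set Omega)) :=
  map (fun p => (c * fst p, snd p)) l.

Lemma eval_app {Omega : Type} (l1 l2 : list (R * @set Omega)) x :
  simple_eval (l1 ++ l2) x = simple_eval l1 x + simple_eval l2 x.
Proof. induction l1 as [|p l IH]; simpl; [ring|]. unfold simple_eval in *. simpl in *. rewrite IH. ring. Qed.
Lemma int_app {Omega : Type} (P : @set Omega -> R) l1 l2 :
  simple_int P (l1 ++ l2) = simple_int P l1 + simple_int P l2.
Proof. induction l1 as [|p l IH]; simpl; [ring|]. unfold simple_int in *. simpl in *. rewrite IH. ring. Qed.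
Lemma eval_scale {Omega : Type} c (l : list (R * @set Omega)) x :
  simple_eval (scale_l c l) x = c * simple_eval l x.
Proof. induction l as [|p l IH]; simpl; [ring|]. unfold simple_eval in *. simpl in *. rewrite IH. ring. Qed.
Lemma int_scale {Omega : Type} (P : @set Omega -> R) c l :
  simple_int P (scale_l c l) = c * simple_int P l.
Proof. induction l as [|p l IH]; simpl; [ring|]. unfold simple_int in *. simpl in *. rewrite IH. ring. Qed.
Lemma over_app {Omega : Type} (A : @set Omega -> Prop) l1 l2 :
  simple_over A l1 -> simple_over A l2 -> simple_over A (l1 ++ l2).
Proof. intros h1 h2 p hp. apply in_app_or in hp. destruct hp; auto. Qed.
Lemma over_scale {Omega : Type} (A : @set Omega -> Prop) c l :
  simple_over A l -> simple_over A (scale_l c l).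
Proof. intros h p hp. unfold scale_l in hp. apply in_map_iff in hp. destruct hp as [q [<- hq]]. simpl. apply (h q hq). Qed.

Lemma int_sint_on {Omega : Type} (P : @set Omega -> R) l :
  simple_int P l = sint_on P setT l.
Proof.
  induction l as [|[c G] l IH]; [reflexivity|]. unfold simple_int, sint_on in *. simpl.
  rewrite IH. f_equal. f_equal. f_equal. apply set_ext; intro x; unfold setI, setT; tauto.
Qed.

Lemma simple_bound {Omega : Type} (A : @set Omega -> Prop) P l d :
  is_field A -> pba A P -> simple_over A l -> (forall x, Rabs (simple_eval l x) <= d) ->
  Rabs (simple_int P l) <= d.
Proof.
  intros hA hP hl H. pose proof (key A P hA hP l hl setT 0 d) as K.
  destruct hA as [hT _]. destruct hP as [h0 [hadd h1]].
  rewrite h1 in K. rewrite int_sint_on.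
  replace (sint_on P setT l) with (0 * 1 + sint_on P setT l) by ring.
  replace d with (d * 1) by ring. apply K; auto.
  intros x _. rewrite Rplus_0_l. apply H.
Qed.

Lemma simple_diff {Omega : Type} (A : @set Omega -> Prop) P l1 l2 d :
  is_field A -> pba A P -> simple_over A l1 -> simple_over A l2 ->
  (forall x, Rabs (simple_eval l1 x - simple_eval l2 x) <= d) ->
  Rabs (simple_int P l1 - simple_int P l2) <= d.
Proof.
  intros hA hP h1 h2 H.
  pose proof (simple_bound A P (l1 ++ scale_l (-1) l2) d hA hP) as K.
  rewrite int_app, int_scale in K.
  replace (simple_int P l1 - simple_int P l2) with (simple_int P l1 + -1 * simple_int P l2) by ring.
  apply K. apply over_app; auto. apply over_scale; auto.
  intro x. rewrite eval_app, eval_scale. replace (simple_eval l1 x + -1 * simple_eval l2 x) with (simple_eval l1 x - simple_eval l2 x) by ring. apply H.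
Qed.

Lemma integral_exists {Omega : Type} (A : @set Omega -> Prop) P f :
  is_field A -> pba A P -> inB A f -> exists v, is_integral A P f v.
Proof.
  intros hA hP hf.
  destruct (hf 1 Rlt_0_1) as [l1 [hl1 c1]].
  set (L := fun r => exists e l, 0 < e /\ simple_over A l /\
     (forall x, Rabs (f x - simple_eval l x) <= e) /\ r = simple_int P l - e).
  assert (close : forall l e l' e', simple_over A l -> simple_over A l' ->
     (forall x, Rabs (f x - simple_eval l x) <= e) -> (forall x, Rabs (f x - simple_eval l' x) <= e') ->
     Rabs (simple_int P l - simple_int P l') <= e + e').
  { intros l e l' e' hl hl' cl cl'. apply (simple_diff A); auto. intro x.
    specialize (cl x); specialize (cl' x).
    replace (simple_eval l x - simple_eval l' x) with (-(f x - simple_eval l x) + (f x - simple_eval l' x)) by ring.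
    eapply Rle_trans; [apply Rabs_triang|]. rewrite Rabs_Ropp. lra. }
  assert (hb : bound L).
  { exists (simple_int P l1 + 1). intros r [e [l [he [hl [cl ->]]]]].
    pose proof (close l e l1 1 hl hl1 cl c1). apply abs_inv in H. lra. }
  assert (hne : exists r, L r).
  { exists (simple_int P l1 - 1). exists 1, l1. repeat split; auto. lra. }
  destruct (completeness L hb hne) as [v [hub hlub]].
  exists v. intros eps heps l hl cl.
  assert (v1 : simple_int P l - eps <= v).
  { apply hub. exists eps, l. repeat split; auto. }
  assert (v2 : v <= simple_int P l + eps).
  { apply hlub. intros r [e [l' [he [hl' [cl' ->]]]]].
    pose proof (close l' e l eps hl' hl cl' cl). apply abs_inv in H. lra. }
  apply Rabs_le. lra.
Qed.

Lemma integral_unique {Omega : Type} (A : @set Omega -> Prop) P f v1 v2 :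
  inB A f -> is_integral A P f v1 -> is_integral A P f v2 -> v1 = v2.
Proof.
  intros hf h1 h2.
  assert (forall e, 0 < e -> Rabs (v1 - v2) <= 0 + e).
  { intros e he. destruct (hf (e/2) ltac:(lra)) as [l [hl cl]].
    specialize (h1 (e/2) ltac:(lra) l hl cl). specialize (h2 (e/2) ltac:(lra) l hl cl).
    replace (v1 - v2) with ((v1 - simple_int P l) - (v2 - simple_int P l)) by ring.
    eapply Rle_trans; [apply Rabs_triang|]. rewrite Rabs_Ropp. lra. }
  apply le_eps in H. pose proof (Rabs_pos (v1 - v2)). 
  destruct (Req_dec (v1 - v2) 0) as [E0|E0]; [lra|]. pose proof (Rabs_pos_lt _ E0). lra.
Qed.

Lemma integral_eq {Omega : Type} (A : @set Omega -> Prop) P f v :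
  inB A f -> is_integral A P f v -> integral A P f = v.
Proof.
  intros hf hv. unfold integral.
  apply (integral_unique A P f); auto.
  apply epsilon_spec. eauto.
Qed.

Lemma integral_spec {Omega : Type} (A : @set Omega -> Prop) P f :
  is_field A -> pba A P -> inB A f -> is_integral A P f (integral A P f).
Proof.
  intros hA hP hf. destruct (integral_exists A P f hA hP hf) as [v hv].
  rewrite (integral_eq A P f v); auto.
Qed.

Lemma approx_integral {Omega : Type} (A : @set Omega -> Prop) P f v :
  is_field A -> pba A P ->
  (forall d, 0 < d -> exists l, simple_over A l /\ (forall x, Rabs (f x - simple_eval l x) <= d) /\
      Rabs (v - simple_int P l) <= d) ->
  is_integral A P f v.
Proof.
  intros hA hP H eps heps l' hl' cl'.
  apply le_eps. intros e he.
  destruct (H (e/2) ltac:(lra)) as [l [hl [cl hv]]].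
  assert (Rabs (simple_int P l - simple_int P l') <= e/2 + eps).
  { apply (simple_diff A); auto. intro x. specialize (cl x); specialize (cl' x).
    replace (simple_eval l x - simple_eval l' x) with (-(f x - simple_eval l x) + (f x - simple_eval l' x)) by ring.
    eapply Rle_trans; [apply Rabs_triang|]. rewrite Rabs_Ropp. lra. }
  replace (v - simple_int P l') with ((v - simple_int P l) + (simple_int P l - simple_int P l')) by ring.
  eapply Rle_trans; [apply Rabs_triang|]. lra.
Qed.

Lemma inB_add {Omega : Type} (A : @set Omega -> Prop) f g :
  inB A f -> inB A g -> inB A (fun w => f w + g w).
Proof.
  intros hf hg e he. destruct (hf (e/2) ltac:(lra)) as [l1 [h1 c1]]. destruct (hg (e/2) ltac:(lra)) as [l2 [h2 c2]].
  exists (l1 ++ l2). split; [apply over_app; auto|]. intro x. rewrite eval_app.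
  specialize (c1 x); specialize (c2 x).
  replace (f x + g x - (simple_eval l1 x + simple_eval l2 x)) with ((f x - simple_eval l1 x) + (g x - simple_eval l2 x)) by ring.
  eapply Rle_trans; [apply Rabs_triang|]. lra.
Qed.

Lemma inB_scale {Omega : Type} (A : @set Omega -> Prop) c f :
  inB A f -> inB A (fun w => c * f w).
Proof.
  intros hf e he. assert (hc : 0 < Rabs c + 1) by (pose proof (Rabs_pos c); lra).
  destruct (hf (e / (Rabs c + 1)) ltac:(apply Rdiv_lt_0_compat; lra)) as [l [hl cl]].
  exists (scale_l c l). split; [apply over_scale; auto|]. intro x. rewrite eval_scale.
  replace (c * f x - c * simple_eval l x) with (c * (f x - simple_eval l x)) by ring.
  rewrite Rabs_mult. specialize (cl x).
  apply Rle_trans with (Rabs c * (e / (Rabs c + 1))).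
  - apply Rmult_le_compat_l; auto. apply Rabs_pos.
  - apply Rle_trans with ((Rabs c + 1) * (e / (Rabs c + 1))).
    + apply Rmult_le_compat_r; [|lra]. left; apply Rdiv_lt_0_compat; lra.
    + right. field. lra.
Qed.

Lemma inB_const {Omega : Type} (A : @set Omega -> Prop) c :
  is_field A -> inB A (fun _ => c).
Proof.
  intros hA e he. exists [(c, setT)]. split.
  - intros p [<-|[]]. simpl. apply hA.
  - intro x. unfold simple_eval; simpl. rewrite ind_true by exact I.
    replace (c - (c * 1 + 0)) with 0 by ring. rewrite Rabs_R0. lra.
Qed.

Lemma int_add {Omega : Type} (A : @set Omega -> Prop) P f g a b :
  is_field A -> pba A P -> inB A f -> inB A g ->
  is_integral A P f a -> is_integral A P g b -> is_integral A P (fun w => f w + g w) (a + b).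
Proof.
  intros hA hP hf hg ha hb. apply approx_integral; auto. intros d hd.
  destruct (hf (d/2) ltac:(lra)) as [l1 [h1 c1]]. destruct (hg (d/2) ltac:(lra)) as [l2 [h2 c2]].
  exists (l1 ++ l2). split; [apply over_app; auto|]. split.
  - intro x. rewrite eval_app.
    specialize (c1 x); specialize (c2 x).
    replace (f x + g x - (simple_eval l1 x + simple_eval l2 x)) with ((f x - simple_eval l1 x) + (g x - simple_eval l2 x)) by ring.
    eapply Rle_trans; [apply Rabs_triang|]. lra.
  - rewrite int_app. specialize (ha (d/2) ltac:(lra) l1 h1 c1). specialize (hb (d/2) ltac:(lra) l2 h2 c2).
    replace (a + b - (simple_int P l1 + simple_int P l2)) with ((a - simple_int P l1) + (b - simple_int P l2)) by ring.
    eapply Rle_trans; [apply Rabs_triang|]. lra.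
Qed.

Lemma int_scale_c {Omega : Type} (A : @set Omega -> Prop) P c f a :
  is_field A -> pba A P -> inB A f ->
  is_integral A P f a -> is_integral A P (fun w => c * f w) (c * a).
Proof.
  intros hA hP hf ha. apply approx_integral; auto. intros d hd.
  assert (hc : 0 < Rabs c + 1) by (pose proof (Rabs_pos c); lra).
  set (d' := d / (Rabs c + 1)).
  assert (hd' : 0 < d') by (apply Rdiv_lt_0_compat; lra).
  assert (hcd : Rabs c * d' <= d).
  { apply Rle_trans with ((Rabs c + 1) * d').
    - apply Rmult_le_compat_r; lra.
    - right. unfold d'. field. lra. }
  destruct (hf d' hd') as [l [hl cl]].
  exists (scale_l c l). split; [apply over_scale; auto|]. split.
  - intro x. rewrite eval_scale.
    replace (c * f x - c * simple_eval l x) with (c * (f x - simple_eval l x)) by ring.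
    rewrite Rabs_mult. specialize (cl x).
    apply Rle_trans with (Rabs c * d'); auto. apply Rmult_le_compat_l; auto. apply Rabs_pos.
  - rewrite int_scale. specialize (ha d' hd' l hl cl).
    replace (c * a - c * simple_int P l) with (c * (a - simple_int P l)) by ring.
    rewrite Rabs_mult. apply Rle_trans with (Rabs c * d'); auto. apply Rmult_le_compat_l; auto. apply Rabs_pos.
Qed.

Lemma int_const {Omega : Type} (A : @set Omega -> Prop) P c :
  is_field A -> pba A P -> is_integral A P (fun _ => c) c.
Proof.
  intros hA hP. apply approx_integral; auto. intros d hd. exists [(c, setT)]. split; [|split].
  - intros p [<-|[]]. simpl. apply hA.
  - intro x. unfold simple_eval; simpl. rewrite ind_true by exact I.
    replace (c - (c * 1 + 0)) with 0 by ring. rewrite Rabs_R0. lra.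
  - unfold simple_int; simpl. destruct hP as [_ [_ h1]]. rewrite h1.
    replace (c - (c * 1 + 0)) with 0 by ring. rewrite Rabs_R0. lra.
Qed.

Lemma eval_bound {Omega : Type} (l : list (R * @set Omega)) :
  exists M, forall x, Rabs (simple_eval l x) <= M.
Proof.
  induction l as [|[c E] l [M HM]].
  - exists 0. intro x. unfold simple_eval; simpl. rewrite Rabs_R0. lra.
  - exists (Rabs c + M). intro x. unfold simple_eval in *; simpl.
    eapply Rle_trans; [apply Rabs_triang|]. apply Rplus_le_compat; auto.
    rewrite Rabs_mult. unfold Defs.ind. destruct (excluded_middle_informative (E x)).
    + rewrite Rabs_R1. lra.
    + rewrite Rabs_R0. pose proof (Rabs_pos c). lra.
Qed.

Lemma inB_bounded {Omega : Type} (A : @set Omega -> Prop) f :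
  inB A f -> exists M, forall x, Rabs (f x) <= M.
Proof.
  intro hf. destruct (hf 1 Rlt_0_1) as [l [_ cl]]. destruct (eval_bound l) as [M HM].
  exists (M + 1). intro x. specialize (cl x); specialize (HM x).
  replace (f x) with ((f x - simple_eval l x) + simple_eval l x) by ring.
  eapply Rle_trans; [apply Rabs_triang|]. lra.
Qed.

Lemma integral_bound {Omega : Type} (A : @set Omega -> Prop) P f M :
  is_field A -> pba A P -> inB A f -> (forall x, Rabs (f x) <= M) -> Rabs (integral A P f) <= M.
Proof.
  intros hA hP hf HM. pose proof (integral_spec A P f hA hP hf) as hv.
  apply le_eps. intros e he.
  destruct (hf (e/2) ltac:(lra)) as [l [hl cl]].
  specialize (hv (e/2) ltac:(lra) l hl cl).
  assert (Rabs (simple_int P l) <= M + e/2).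
  { apply (simple_bound A); auto. intro x. specialize (cl x). specialize (HM x).
    replace (simple_eval l x) with (f x - (f x - simple_eval l x)) by ring.
    eapply Rle_trans; [apply Rabs_triang|]. rewrite Rabs_Ropp. lra. }
  replace (integral A P f) with ((integral A P f - simple_int P l) + simple_int P l) by ring.
  eapply Rle_trans; [apply Rabs_triang|]. lra.
Qed.

Definition wsum {Omega : Type} (l : list (R * Omega)) (h : Omega -> R) : R :=
  fold_right (fun p acc => fst p * h (snd p) + acc) 0 l.
Definition wtot {Omega : Type} (l : list (R * Omega)) : R :=
  fold_right (fun p acc => fst p + acc) 0 l.

Lemma wsum_lin {Omega : Type} (l : list (R * Omega)) c h1 h2 :
  wsum l (fun w => c * h1 w + h2 w) = c * wsum l h1 + wsum l h2.
Proof. induction l as [|p l IH]; unfold wsum in *; simpl; [ring|]. rewrite IH. ring. Qed.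
Lemma wsum_zero {Omega : Type} (l : list (R * Omega)) : wsum l (fun _ => 0) = 0.
Proof. induction l as [|p l IH]; unfold wsum in *; simpl; [ring|]. rewrite IH. ring. Qed.
Lemma wsum_bound {Omega : Type} (l : list (R * Omega)) h e :
  (forall p, In p l -> 0 <= fst p) -> (forall w, Rabs (h w) <= e) -> Rabs (wsum l h) <= e * wtot l.
Proof.
  intros hl H. induction l as [|p l IH]; unfold wsum, wtot in *; simpl.
  - rewrite Rabs_R0. lra.
  - eapply Rle_trans; [apply Rabs_triang|]. rewrite Rabs_mult.
    rewrite (Rabs_right (fst p)) by (apply Rle_ge, hl; simpl; auto).
    assert (0 <= fst p) by (apply hl; simpl; auto).
    specialize (H (snd p)).
    assert (fst p * Rabs (h (snd p)) <= fst p * e) by (apply Rmult_le_compat_l; auto).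
    assert (IH' := IH (fun q hq => hl q (or_intror hq))). nra.
Qed.
Lemma wsum_nonneg {Omega : Type} (l : list (R * Omega)) h :
  (forall p, In p l -> 0 <= fst p) -> (forall w, 0 <= h w) -> 0 <= wsum l h.
Proof.
  intros hl H. induction l as [|p l IH]; unfold wsum in *; simpl; [lra|].
  assert (0 <= fst p) by (apply hl; simpl; auto). specialize (H (snd p)).
  assert (IH' := IH (fun q hq => hl q (or_intror hq))). nra.
Qed.

Lemma sint_conv {Omega : Type} (tau : Omega -> @set Omega -> R) l l' :
  simple_int (conv_comb tau l) l' = wsum l (fun w => simple_int (tau w) l').
Proof.
  induction l' as [|[c E] l' IH].
  - unfold simple_int. simpl. symmetry. apply wsum_zero.
  - unfold simple_int in *. simpl. rewrite IH. rewrite wsum_lin. reflexivity.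
Qed.

Lemma integral_conv {Omega : Type} (A : @set Omega -> Prop) tau f l v :
  inB A f -> (forall w, is_integral A (tau w) f (v w)) -> conv_weights l ->
  integral A (conv_comb tau l) f = wsum l v.
Proof.
  intros hf hv [hl1 hl2]. apply integral_eq; auto.
  intros eps heps l' hl' cl'. rewrite sint_conv.
  replace (wsum l v - wsum l (fun w => simple_int (tau w) l')) with (wsum l (fun w => 1 * v w + (- simple_int (tau w) l'))).
  2:{ rewrite wsum_lin. replace (wsum l (fun w => - simple_int (tau w) l')) with (-1 * wsum l (fun w => simple_int (tau w) l') + wsum l (fun _ => 0)).
      - rewrite wsum_zero. ring.
      - rewrite <- wsum_lin. f_equal. apply functional_extensionality; intro; ring. }
  replace eps with (eps * wtot l) by (unfold wtot; rewrite hl2; ring).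
  apply wsum_bound; auto. intro w. replace (1 * v w + - simple_int (tau w) l') with (v w - simple_int (tau w) l') by ring.
  apply (hv w eps heps l' hl' cl').
Qed.

Lemma int_sum_list {Omega N : Type} (A : @set Omega -> Prop) P (f : N -> Omega -> R) :
  is_field A -> pba A P -> forall I, (forall i, In i I -> inB A (f i)) ->
  inB A (fun w => fold_right Rplus 0 (map (fun i => f i w) I)) /\
  is_integral A P (fun w => fold_right Rplus 0 (map (fun i => f i w) I))
     (fold_right Rplus 0 (map (fun i => integral A P (f i)) I)).
Proof.
  intros hA hP I. induction I as [|i I IH]; intro hI; simpl.
  - split; [apply (inB_const A 0 hA)|apply (int_const A P 0 hA hP)].
  - assert (hi : inB A (f i)) by (apply hI; simpl; auto).
    destruct (IH (fun j hj => hI j (or_intror hj))) as [h1 h2].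
    split; [apply inB_add; auto|].
    apply int_add; auto. apply integral_spec; auto.
Qed.

Fixpoint sumk (n : nat) (h : nat -> R) : R :=
  match n with O => 0 | S m => sumk m h + h m end.

Lemma sumk_ext n h g : (forall k, (k < n)%nat -> h k = g k) -> sumk n h = sumk n g.
Proof. induction n; intro H; simpl; auto. rewrite IHn by (intros; apply H; lia). rewrite H by lia. auto. Qed.
Lemma sumk_lin n c h1 h2 : sumk n (fun k => c * h1 k + h2 k) = c * sumk n h1 + sumk n h2.
Proof. induction n; simpl; [ring|]. rewrite IHn. ring. Qed.
Lemma sumk_zero n : sumk n (fun _ => 0) = 0.
Proof. induction n; simpl; [auto|rewrite IHn; ring]. Qed.
Lemma sumk_le n h g : (forall k, (k < n)%nat -> h k <= g k) -> sumk n h <= sumk n g.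
Proof. induction n; intro H; simpl; [lra|]. apply Rplus_le_compat; [apply IHn; intros; apply H; lia|apply H; lia]. Qed.
Lemma sumk_nonneg n h : (forall k, (k < n)%nat -> 0 <= h k) -> 0 <= sumk n h.
Proof. intro H. replace 0 with (sumk n (fun _ => 0)). apply sumk_le; auto. induction n; simpl; auto; rewrite IHn; [ring|intros; apply H; lia]. Qed.
Lemma sumk_ge_term n h k : (forall j, (j < n)%nat -> 0 <= h j) -> (k < n)%nat -> h k <= sumk n h.
Proof.
  induction n; intros H hk; [lia|]. simpl.
  destruct (Nat.eq_dec k n) as [->|ne].
  - pose proof (sumk_nonneg n h (fun j hj => H j ltac:(lia))). lra.
  - pose proof (IHn (fun j hj => H j ltac:(lia)) ltac:(lia)). pose proof (H n ltac:(lia)). lra.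
Qed.

Lemma wsum_app {W : Type} (l1 l2 : list (R * W)) h : wsum (l1 ++ l2) h = wsum l1 h + wsum l2 h.
Proof. induction l1 as [|q l IH]; unfold wsum in *; simpl; [ring|]. rewrite IH. ring. Qed.
Lemma wtot_app {W : Type} (l1 l2 : list (R * W)) : wtot (l1 ++ l2) = wtot l1 + wtot l2.
Proof. induction l1 as [|q l IH]; unfold wtot in *; simpl; [ring|]. rewrite IH. ring. Qed.
Definition sc_l {W : Type} (c : R) (l : list (R * W)) := map (fun q => (c * fst q, snd q)) l.
Lemma wsum_sc {W : Type} c (l : list (R * W)) h : wsum (sc_l c l) h = c * wsum l h.
Proof. induction l as [|q l IH]; unfold wsum in *; simpl; [ring|]. rewrite IH. ring. Qed.
Lemma wtot_sc {W : Type} c (l : list (R * W)) : wtot (sc_l c l) = c * wtot l.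
Proof. induction l as [|q l IH]; unfold wtot in *; simpl; [ring|]. rewrite IH. ring. Qed.

Lemma conv_mix {W : Type} (l0 l : list (R * W)) t :
  0 <= t <= 1 -> conv_weights l0 -> conv_weights l -> conv_weights (sc_l (1 - t) l0 ++ sc_l t l).
Proof.
  intros ht [h01 h02] [h1 h2]. split.
  - intros q hq. apply in_app_or in hq. unfold sc_l in hq.
    destruct hq as [hq|hq]; apply in_map_iff in hq; destruct hq as [q' [<- hq']]; simpl.
    + apply Rmult_le_pos; [lra|auto].
    + apply Rmult_le_pos; [lra|auto].
  - change (wtot (sc_l (1 - t) l0 ++ sc_l t l) = 1). rewrite wtot_app, !wtot_sc.
    unfold wtot; rewrite h02, h2. ring.
Qed.

Lemma separation {W : Type} (n : nat) (a : nat -> W -> R) (p B : nat -> R) (eps : R) (w0 : W) :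
  0 < eps -> (forall k w, Rabs (a k w) <= B k) ->
  (forall l, conv_weights l -> exists k, (k < n)%nat /\ eps <= Rabs (wsum l (a k) - p k)) ->
  exists y : nat -> R, exists g, 0 < g /\ forall w, g <= sumk n (fun k => y k * (a k w - p k)).
Proof.
  intros heps hB Hsep.
  set (yv := fun (l : list (R * W)) k => wsum l (a k) - p k).
  set (norm2 := fun (y : nat -> R) => sumk n (fun k => y k ^ 2)).
  set (C := fun k => B k + Rabs (p k)).
  assert (hC : forall l k, conv_weights l -> Rabs (yv l k) <= C k).
  { intros l k [hl1 hl2]. unfold yv, C.
    pose proof (wsum_bound l (a k) (B k) hl1 (hB k)) as H. unfold wtot in H. rewrite hl2, Rmult_1_r in H.
    unfold Rminus. eapply Rle_trans; [apply Rabs_triang|]. rewrite Rabs_Ropp. lra. }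
  set (Rb := sumk n (fun k => 4 * C k ^ 2)).
  assert (hRb : 0 <= Rb) by (apply sumk_nonneg; intros; nra).
  assert (hconv1 : forall w : W, conv_weights [(1, w)]).
  { intro w. split. intros q [<-|[]]; simpl; lra. simpl; ring. }
  assert (hnorm_eps : forall l, conv_weights l -> eps ^ 2 <= norm2 (yv l)).
  { intros l hl. destruct (Hsep l hl) as [k [hk hk2]].
    apply Rle_trans with (yv l k ^ 2).
    - unfold yv. rewrite <- (pow2_abs (wsum l (a k) - p k)). 
      assert (X : eps * eps <= Rabs (wsum l (a k) - p k) * Rabs (wsum l (a k) - p k)) by (apply Rmult_le_compat; lra).
      simpl. rewrite !Rmult_1_r. exact X.
    - apply (sumk_ge_term n (fun k => yv l k ^ 2)); auto. intros; nra. }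
  set (E := fun r => exists l, conv_weights l /\ r = - norm2 (yv l)).
  assert (hEb : bound E). { exists 0. intros r [l [hl ->]]. pose proof (hnorm_eps l hl). nra. }
  assert (hEn : exists r, E r). { exists (- norm2 (yv [(1, w0)])). exists [(1, w0)]. split; auto. }
  destruct (completeness E hEb hEn) as [m [hub hlub]].
  set (d2 := - m).
  assert (hd2a : forall l, conv_weights l -> d2 <= norm2 (yv l)).
  { intros l hl. assert (E (- norm2 (yv l))) by (exists l; auto). apply hub in H. unfold d2. lra. }
  assert (hd2b : eps ^ 2 <= d2).
  { assert (m <= - eps ^ 2). { apply hlub. intros r [l [hl ->]]. pose proof (hnorm_eps l hl). lra. }
    unfold d2. lra. }
  assert (hd2c : forall d, 0 < d -> exists l, conv_weights l /\ norm2 (yv l) <= d2 + d).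
  { intros d hd. apply NNPP. intro hn.
    assert (m <= m - d).
    { apply hlub. intros r [l [hl ->]]. destruct (Rle_or_lt (norm2 (yv l)) (d2 + d)) as [h|h].
      - exfalso; apply hn; eauto.
      - unfold d2 in h. lra. }
    lra. }
  assert (hd2pos : 0 < d2) by nra.
  set (t := d2 / (2 * (Rb + d2))).
  assert (ht1 : t * (2 * (Rb + d2)) = d2) by (unfold t; field; lra).
  assert (ht0 : 0 < t) by (unfold t; apply Rdiv_lt_0_compat; lra).
  assert (ht2 : 2 * t <= 1) by nra.
  assert (ht3 : t * Rb <= d2 / 2) by nra.
  destruct (hd2c (t * d2 / 2) ltac:(nra)) as [l0 [hl0 hl0n]].
  exists (yv l0), (d2 / 2). split; [lra|].
  assert (key2 : forall l, conv_weights l -> d2 / 2 <= sumk n (fun k => yv l0 k * yv l k)).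
  { intros l hl.
    pose proof (hd2a _ (conv_mix l0 l t ltac:(lra) hl0 hl)) as Hm.
    set (S1 := norm2 (yv l0)). set (S2 := sumk n (fun k => yv l0 k * yv l k)).
    set (S3 := sumk n (fun k => (yv l k - yv l0 k) ^ 2)).
    assert (heq : norm2 (yv (sc_l (1 - t) l0 ++ sc_l t l)) = (1 - 2 * t) * S1 + (2 * t * S2 + (t ^ 2 * S3 + 0))).
    { unfold S1, S2, S3, norm2. cbv beta.
      rewrite <- (sumk_zero n).
      rewrite <- !sumk_lin. apply sumk_ext. intros k hk. unfold yv. rewrite wsum_app, !wsum_sc.
      destruct hl0 as [_ e0]. destruct hl as [_ e1]. ring. }
    assert (hS3 : S3 <= Rb).
    { apply sumk_le. intros k hk. pose proof (hC l k hl). pose proof (hC l0 k hl0).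
      apply abs_inv in H. apply abs_inv in H0. nra. }
    assert (hS1 : d2 <= S1) by (apply hd2a; auto).
    rewrite heq in Hm.
    assert (hS3' : t ^ 2 * S3 <= t ^ 2 * Rb) by (apply Rmult_le_compat_l; nra).
    assert (h1 : (1 - 2 * t) * S1 <= (1 - 2 * t) * (d2 + t * d2 / 2)).
    { apply Rmult_le_compat_l. lra. unfold S1; exact hl0n. }
    assert (h3 : t ^ 2 * Rb <= t * (d2 / 2)).
    { replace (t ^ 2 * Rb) with (t * (t * Rb)) by ring. apply Rmult_le_compat_l; lra. }
    assert (h4 : (1 - 2 * t) * (d2 + t * d2 / 2) = d2 - 2 * t * d2 + t * d2 / 2 - t * t * d2) by (unfold Rdiv; nra).
    assert (h5 : 0 <= t * t * d2) by (apply Rmult_le_pos; [apply Rmult_le_pos|]; lra).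
    assert (h6 : t * d2 <= 2 * t * S2) by lra.
    apply (Rmult_le_reg_l (2 * t)). lra. lra. }
  intro w. specialize (key2 _ (hconv1 w)).
  eapply Rle_trans; [exact key2|]. right. apply sumk_ext. intros k hk. unfold yv, wsum. simpl. ring.
Qed.

Lemma sumk_sub n h1 h2 : sumk n (fun k => h1 k - h2 k) = sumk n h1 - sumk n h2.
Proof. induction n; simpl; [ring|]. rewrite IHn. ring. Qed.

Lemma fold_nonneg {N : Type} (I : list N) (g : N -> R) :
  (forall i, In i I -> 0 <= g i) -> 0 <= fold_right Rplus 0 (map g I).
Proof.
  induction I as [|i I IH]; intro H; simpl; [lra|].
  pose proof (H i (or_introl eq_refl)). pose proof (IH (fun j hj => H j (or_intror hj))). lra.
Qed.

Lemma sum_none {N : Type} (l : list N) j v :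
  ~ In j l -> fold_right Rplus 0 (map (fun i => if excluded_middle_informative (i = j) then v else 0) l) = 0.
Proof.
  induction l as [|i l IH]; intro H; simpl; [auto|].
  destruct (excluded_middle_informative (i = j)) as [->|ne].
  - exfalso; apply H; simpl; auto.
  - rewrite IH; [ring|]. intro; apply H; simpl; auto.
Qed.

Lemma sum_single {N : Type} (l : list N) j v :
  NoDup l -> In j l -> fold_right Rplus 0 (map (fun i => if excluded_middle_informative (i = j) then v else 0) l) = v.
Proof.
  induction l as [|i l IH]; intros hnd hin; [destruct hin|]. simpl.
  apply NoDup_cons_iff in hnd. destruct hnd as [hni hnd].
  destruct (excluded_middle_informative (i = j)) as [->|ne].
  - rewrite sum_none; auto. ring.
  - destruct hin as [->|hin]; [tauto|]. rewrite IH; auto. ring.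
Qed.

Lemma lin_int {Omega : Type} (A : @set Omega -> Prop) Q (F : nat -> Omega -> R) (y : nat -> R) :
  is_field A -> pba A Q -> (forall k, inB A (F k)) -> forall n,
  inB A (fun w => sumk n (fun k => y k * F k w)) /\
  is_integral A Q (fun w => sumk n (fun k => y k * F k w)) (sumk n (fun k => y k * integral A Q (F k))).
Proof.
  intros hA hQ hF n. induction n as [|n [IH1 IH2]]; simpl.
  - split; [apply (inB_const A 0 hA)|apply (int_const A Q 0 hA hQ)].
  - split.
    + apply inB_add; auto. apply inB_scale; auto.
    + apply int_add; auto. apply inB_scale; auto. apply int_scale_c; auto. apply integral_spec; auto.
Qed.

Theorem theorem5 (Omega N : Type) (A : @set Omega -> Prop)
  (M : N -> @set Omega -> Prop) (t : N -> Omega -> @set Omega -> R) :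
  inhabited N ->
  type_space A M t ->
  (universally_consistent A t /\ ~ universal_money_pump A t) \/
  (~ universally_consistent A t /\ universal_money_pump A t).
Proof.
  intros _ [hA hTi].
  assert (hpt : forall i w, pba A (t i w)) by (intros i w; apply (hTi i)).
  destruct (classic (universally_consistent A t)) as [UC|nUC].
  - left. split; auto. intros [I [hnd [S [hS HMP]]]].
    destruct (UC I S hS) as [P [hP [hPi hinf]]].
    destruct (HMP P hP hinf) as [f [[hfB hcert] hneg]].
    assert (hnn : forall i w, In i I -> 0 <= integral A (t i w) (f i)).
    { intros i w hi. destruct (hcert w) as [S' [_ [hw hsub]]]. exact (hsub w hw i hi). }
    assert (hPnn : forall i, In i I -> 0 <= integral A P (f i)).
    { intros i hi. apply le_eps. intros e he.
      destruct (hPi i hi) as [_ hap].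
      destruct (hap [f i] e (fun g hg => match hg with or_introl h => eq_rect _ (inB A) (hfB i hi) _ h | or_intror h => match h with end end) he) as [l [hl hcl]].
      specialize (hcl (f i) (or_introl eq_refl)).
      rewrite (integral_conv A (t i) (f i) l (fun w => integral A (t i w) (f i))) in hcl; auto.
      2:{ intro w. apply integral_spec; auto. }
      pose proof (wsum_nonneg l (fun w => integral A (t i w) (f i)) (proj1 hl) (fun w => hnn i w hi)).
      apply Rlt_le in hcl. apply abs_inv in hcl. lra. }
    destruct (int_sum_list A P f hA hP I hfB) as [hsB hsum].
    rewrite (integral_eq _ _ _ _ hsB hsum) in hneg.
    pose proof (fold_nonneg I (fun i => integral A P (f i)) hPnn). lra.
  - right. split; auto.
    assert (HX : exists I S, cc_component A t I S /\ forall P, pba A P -> (forall i, In i I -> Pi A (t i) P) -> inf_outer_pos A P S -> False).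
    { apply NNPP; intro hn; apply nUC; intros I S hS. apply NNPP; intro hn2. apply hn. exists I, S. split; auto.
      intros P h1 h2 h3. apply hn2. eauto. }
    destruct HX as [I [S [hS HnoP]]].
    set (dec := fun x y : N => excluded_middle_informative (x = y)).
    set (I' := nodup dec I).
    exists I'. split; [apply NoDup_nodup|]. exists S. split.
    { destruct hS as [hne [E [hE [hsub hc]]]]. split; auto. exists E. split; auto. split; auto.
      intros w hw i hi. apply hc; auto. exact (proj1 (nodup_In dec I i) hi). }
    intros P hP hinf.
    assert (HJ : exists j, In j I /\ ~ Pi A (t j) P).
    { apply NNPP; intro hn. apply (HnoP P hP); auto. intros i hi. apply NNPP; intro; apply hn; eauto. }
    destruct HJ as [j [hj hnPi]].
    assert (hj' : In j I') by exact (proj2 (nodup_In dec I j) hj).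
    assert (HF : exists fs eps, (forall f, In f fs -> inB A f) /\ 0 < eps /\ forall l, conv_weights l ->
        exists f, In f fs /\ eps <= Rabs (integral A P f - integral A (conv_comb (t j) l) f)).
    { apply NNPP; intro hn. apply hnPi. split; auto. intros fs eps hfs heps. apply NNPP; intro hn2. apply hn.
      exists fs, eps. split; auto; split; auto. intros l hl. apply NNPP; intro hn3. apply hn2. exists l. split; auto.
      intros f hf. apply Rnot_le_lt. intro. apply hn3. eauto. }
    destruct HF as [fs [eps [hfs [heps Hl]]]].
    set (F := fun k => nth k fs (fun _ : Omega => 0)).
    assert (hF : forall k, inB A (F k)).
    { intro k. unfold F. destruct (Nat.lt_ge_cases k (length fs)) as [h|h].
      - apply hfs. apply nth_In. exact h.
      - rewrite nth_overflow by lia. apply inB_const; auto. }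
    set (a := fun k w => integral A (t j w) (F k)).
    set (p := fun k => integral A P (F k)).
    set (B := fun k => epsilon (inhabits 0) (fun Mb => forall w, Rabs (a k w) <= Mb)).
    assert (hB : forall k w, Rabs (a k w) <= B k).
    { intro k. unfold B. apply (epsilon_spec (inhabits 0) (fun Mb => forall w, Rabs (a k w) <= Mb)).
      destruct (inB_bounded A (F k) (hF k)) as [Mk hMk]. exists Mk. intro w.
      unfold a. apply integral_bound; auto. }
    destruct hS as [[w0 _] _].
    assert (Hsep : forall l, conv_weights l -> exists k, (k < length fs)%nat /\ eps <= Rabs (wsum l (a k) - p k)).
    { intros l hl. destruct (Hl l hl) as [f [hf hge]].
      destruct (In_nth fs f (fun _ => 0) hf) as [k [hk hkf]].
      exists k. split; auto.
      rewrite (integral_conv A (t j) f l (fun w => integral A (t j w) f)) in hge; auto.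
      2:{ intro w. apply integral_spec; auto. }
      rewrite Rabs_minus_sym in hge. unfold a, p, F. rewrite hkf. exact hge. }
    destruct (separation (length fs) a p B eps w0 heps hB Hsep) as [y [g [hg Hy]]].
    set (n := length fs) in *.
    set (c := sumk n (fun k => y k * p k) + g).
    set (gf := fun w => sumk n (fun k => y k * F k w) + (- c)).
    assert (hgf : forall Q, pba A Q -> inB A gf /\ integral A Q gf = sumk n (fun k => y k * integral A Q (F k)) + - c).
    { intros Q hQ. destruct (lin_int A Q F y hA hQ hF n) as [h1 h2].
      assert (inB A gf) by (apply inB_add; auto; apply inB_const; auto).
      split; auto. apply integral_eq; auto. apply int_add; auto. apply inB_const; auto. apply int_const; auto. }
    assert (hgt : forall w, 0 <= integral A (t j w) gf).
    { intro w. destruct (hgf _ (hpt j w)) as [_ ->]. specialize (Hy w).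
      assert (sumk n (fun k => y k * (a k w - p k)) = sumk n (fun k => y k * a k w) - sumk n (fun k => y k * p k)).
      { rewrite <- sumk_sub. apply sumk_ext. intros; ring. }
      unfold c. unfold a in *. lra. }
    assert (hgP : integral A P gf = - g).
    { destruct (hgf _ hP) as [_ ->]. unfold c, p. ring. }
    assert (hgB : inB A gf) by (apply (hgf P hP)).
    set (fb := fun i w => if excluded_middle_informative (i = j) then gf w else 0).
    exists fb. split.
    + split.
      * intros i hi. unfold fb. destruct (excluded_middle_informative (i = j)); auto. apply inB_const; auto.
      * intros w. exists setT. split; [|split; [exact Logic.I|]].
        { split; [exists w; exact Logic.I|]. exists setT. split; [apply hA|]. split; [intros x hx; exact hx|].
          intros w' _ i hi. apply (hpt i w'). }
        intros w' _ i hi. unfold fb. destruct (excluded_middle_informative (i = j)) as [->|ne]; auto.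
        rewrite (integral_eq A (t i w') (fun _ => 0) 0); [lra|apply inB_const; auto|apply int_const; auto].
    + replace (fun w => fold_right Rplus 0 (map (fun i => fb i w) I')) with gf.
      * rewrite hgP. lra.
      * apply functional_extensionality. intro w. unfold fb. symmetry. apply sum_single; auto. apply NoDup_nodup.
Qed.
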